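(* In the parallel-links routing game with homogeneous costs described in the context and $N=2$ users, the Nash Bargaining Solution $\tilde{\mathbf g}$ of $(\mathcal G,\hat{\mathbf J})$ is the feasible, system-optimal cost vector with equal gains, i.e., $\tilde g^1+\tilde g^2=J^*_{sys}$ and $\hat J^1-\tilde g^1=\hat J^2-\tilde g^2$.
   Context: Parallel-links routing game: users $\mathcal N=\{1,\dots,N\}$ share parallel links $\mathcal L=\{1,\dots,L\}$ from a common source to a common destination; link $l$ has capacity $c_l$. User $i$ has demand $r^i>0$, $R=\sum_ir^i<\sum_lc_l$. A routing strategy of user $i$ is $\mathbf f^i=(f^i_l)_l$ with $f^i_l\ge0$, $\sum_lf^i_l=r^i$; feasible profiles form $\mathbf F$; $f_l=\sum_if^i_l$. Homogeneous costs: $J^i(\mathbf f)=\sum_lf^i_lT_l(f_l)$, each $T_l:[0,\infty)\to[0,\infty)$ strictly increasing, convex, continuously differentiable, with $T_l(f_l)=T(c_l-f_l)$ for $f_l<c_l$ and $T_l(f_l)=\infty$ for $f_l\ge c_l$, for a single link-independent function $T$ with $T(c_l-f_l)$ strictly increasing in $f_l$. NEP: the unique feasible $\hat{\mathbf f}$ in which each user's strategy minimizes its cost given the others'; $\hat J^i=J^i(\hat{\mathbf f})$, $\hat{\mathbf J}=(\hat J^i)_i$. $J^*_{sys}$ is the minimum over $\mathbf F$ of $\sum_iJ^i=\sum_lf_lT_l(f_l)$. $\mathcal G$ is the set of all vectors $\sum_{m=1}^Mp_m(J^1(\mathbf f(m)),\dots,J^N(\mathbf f(m)))$ with $M$ finite,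 $p_m>0$, $\sum_mp_m=1$, $\mathbf f(m)\in\mathbf F$. The NBS is the unique $\tilde{\mathbf g}$ maximizing $\prod_i(\hat J^i-g^i)$ over $\mathbf g\in\mathcal G$ with $g^i\le\hat J^i$ for all $i$ (equivalently, the unique vector satisfying Nash's axioms of individual rationality, Pareto optimality, symmetry, invariance to affine payoff transformations, and independence of irrelevant alternatives). *)

(* Defs.v *)
From Stdlib Require Import Reals Lra Lia List.
From Coquelicot Require Import Coquelicot.
Open Scope R_scope.

Fixpoint sumL (n : nat) (F : nat -> R) : R :=
  match n with O => 0 | S m => sumL m F + F m end.

(* A routing profile for 2 users (indices 0,1) over links 0..L-1:
   prof i l = flow of user i on link l. *)
Definition profile := nat -> nat -> R.

(* link cost T_l(x) = T(c_l - x)  (for x < c_l; infinite for x >= c_l) *)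
Definition Tl (T : R -> R) (c : nat -> R) (l : nat) (x : R) : R := T (c l - x).

Definition agg (f : profile) (l : nat) : R := f 0%nat l + f 1%nat l.

(* Feasible profiles with finite cost: nonnegative flows meeting demands and
   total flow strictly below capacity on every link. *)
Definition feasible (L : nat) (c r : nat -> R) (f : profile) : Prop :=
  (forall i l, (i < 2)%nat -> (l < L)%nat -> 0 <= f i l) /\
  (forall i, (i < 2)%nat -> sumL L (f i) = r i) /\
  (forall l, (l < L)%nat -> agg f l < c l).

Definition J (L : nat) (T : R -> R) (c : nat -> R) (f : profile) (i : nat) : R :=
  sumL L (fun l => f i l * Tl T c l (agg f l)).

Definition upd (f : profile) (i : nat) (s : nat -> R) : profile :=
  fun j l => if Nat.eqb j i then s l else f j l.

Definition is_NEP L T c r (f : profile) : Prop :=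
  feasible L c r f /\
  forall i s, (i < 2)%nat -> feasible L c r (upd f i s) ->
    J L T c f i <= J L T c (upd f i s) i.

Definition is_sys_min L T c r (v : R) : Prop :=
  (exists f, feasible L c r f /\ J L T c f 0 + J L T c f 1 = v) /\
  (forall f, feasible L c r f -> v <= J L T c f 0 + J L T c f 1).

Fixpoint wsum (ws : list (R * profile)) (F : profile -> R) : R :=
  match ws with nil => 0 | (p, f) :: t => p * F f + wsum t F end.

Definition in_G L T c r (g : R * R) : Prop :=
  exists ws : list (R * profile),
    ws <> nil /\
    List.Forall (fun pf => 0 < fst pf /\ feasible L c r (snd pf)) ws /\
    wsum ws (fun _ => 1) = 1 /\
    fst g = wsum ws (fun f => J L T c f 0) /\
    snd g = wsum ws (fun f => J L T c f 1).

Definition bargain_adm L T c r (Jh g : R * R) : Prop :=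
  in_G L T c r g /\ fst g <= fst Jh /\ snd g <= snd Jh.

Definition nash_prod (Jh g : R * R) : R := (fst Jh - fst g) * (snd Jh - snd g).

Definition is_NBS L T c r (Jh g : R * R) : Prop :=
  bargain_adm L T c r Jh g /\
  (forall g', bargain_adm L T c r Jh g' -> nash_prod Jh g' <= nash_prod Jh g) /\
  (forall g', bargain_adm L T c r Jh g' -> nash_prod Jh g <= nash_prod Jh g' -> g' = g).

Definition strictly_increasing_on (cl : R) (h : R -> R) : Prop :=
  forall x y, 0 <= x -> x < y -> y < cl -> h x < h y.

Definition convex_on (cl : R) (h : R -> R) : Prop :=
  forall x y t, 0 <= x < cl -> 0 <= y < cl -> 0 <= t <= 1 ->
    h (t * x + (1 - t) * y) <= t * h x + (1 - t) * h y.

Definition C1_on (cl : R) (h : R -> R) : Prop :=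
  exists d : R -> R,
    (forall x, 0 < x < cl -> is_derive h x (d x)) /\
    filterlim (fun t => (h t - h 0) / t) (at_right 0) (locally (d 0)) /\
    (forall x, 0 <= x < cl ->
       filterlim d (within (fun y => 0 <= y < cl) (locally x)) (locally (d x))).

(* Main.v *)
Require Import Defs.
From Stdlib Require Import Reals Lra Lia Classical.
From Coquelicot Require Import Coquelicot.
Open Scope R_scope.

Lemma sumL_ext n F G : (forall k, (k < n)%nat -> F k = G k) -> sumL n F = sumL n G.
Proof. induction n; simpl; intros H; [reflexivity|]. rewrite IHn by (intros; apply H; lia). rewrite H by lia; reflexivity. Qed.

Lemma sumL_plus n F G : sumL n (fun k => F k + G k) = sumL n F + sumL n G.
Proof. induction n; simpl; [lra|]. rewrite IHn; lra. Qed.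

Lemma sumL_minus n F G : sumL n (fun k => F k - G k) = sumL n F - sumL n G.
Proof. induction n; simpl; [lra|]. rewrite IHn; lra. Qed.

Lemma sumL_le n F G : (forall k, (k < n)%nat -> F k <= G k) -> sumL n F <= sumL n G.
Proof. induction n; simpl; intros H; [lra|]. assert (H1 := H n ltac:(lia)). assert (sumL n F <= sumL n G) by (apply IHn; intros; apply H; lia). lra. Qed.

Lemma sumL_zero n : sumL n (fun _ => 0) = 0.
Proof. induction n; simpl; [lra|]. rewrite IHn; lra. Qed.

Lemma sumL_pos n D l : (forall k, (k < n)%nat -> 0 <= D k) -> (l < n)%nat -> 0 < D l -> 0 < sumL n D.
Proof.
  induction n; simpl; intros H Hl Hd; [lia|].
  destruct (Nat.eq_dec l n) as [->|Hne].
  - assert (0 <= sumL n D). { rewrite <- (sumL_zero n). apply sumL_le. intros; apply H; lia. } lra.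
  - assert (0 < sumL n D) by (apply IHn; [intros; apply H; lia|lia|auto]). assert (0 <= D n) by (apply H; lia). lra.
Qed.

Lemma sumL_exists_lt n F G l : sumL n F = sumL n G -> (l < n)%nat -> G l < F l ->
  exists m, (m < n)%nat /\ F m < G m.
Proof.
  intros Hs Hl Hlt. destruct (classic (exists m, (m < n)%nat /\ F m < G m)) as [H|H]; [exact H|exfalso].
  assert (0 < sumL n (fun k => F k - G k)).
  { apply (sumL_pos n _ l); auto; [|lra]. intros k Hk. destruct (Rlt_le_dec (F k) (G k)); [exfalso; apply H; eauto|lra]. }
  rewrite sumL_minus in H0. lra.
Qed.

Lemma sumL_ind n l a : (l < n)%nat -> sumL n (fun k => if Nat.eqb k l then a else 0) = a.
Proof.
  induction n; simpl; intros Hl; [lia|].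
  destruct (Nat.eq_dec l n) as [->|Hne].
  - rewrite Nat.eqb_refl. rewrite (sumL_ext n _ (fun _ => 0)). { rewrite sumL_zero; lra. }
    intros k Hk. destruct (Nat.eqb_spec k n); [lia|auto].
  - rewrite IHn by lia. destruct (Nat.eqb_spec n l); [lia|lra].
Qed.

Lemma sumL_two n F G l m : (l < n)%nat -> (m < n)%nat -> l <> m ->
  (forall k, (k < n)%nat -> k <> l -> k <> m -> F k = G k) ->
  sumL n F = sumL n G + (F l - G l) + (F m - G m).
Proof.
  intros Hl Hm Hlm H.
  transitivity (sumL n (fun k => G k + ((if Nat.eqb k l then F l - G l else 0) + (if Nat.eqb k m then F m - G m else 0)))).
  - apply sumL_ext. intros k Hk. destruct (Nat.eqb_spec k l); destruct (Nat.eqb_spec k m); subst; try lia.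
    + lra.
    + lra.
    + rewrite H by auto. lra.
  - rewrite sumL_plus, sumL_plus, sumL_ind, sumL_ind by auto. lra.
Qed.

Lemma slope (cl : R) (h : R -> R) p q e : convex_on cl h -> 0 <= p -> p <= q -> 0 < e -> q + e < cl ->
  h (p + e) + h q <= h p + h (q + e).
Proof.
  intros Hc Hp Hpq He Hq.
  set (D := q + e - p). assert (HD : 0 < D) by (unfold D; lra).
  set (t := (q - p) / D).
  assert (Ht : 0 <= t <= 1).
  { unfold t; split. apply Rdiv_le_0_compat; lra. apply Rmult_le_reg_r with D; auto. unfold Rdiv. rewrite Rmult_assoc, Rinv_l by lra. unfold D; lra. }
  assert (E1 : p + e = t * p + (1 - t) * (q + e)).
  { unfold t, D. field. lra. }
  assert (E2 : q = (1 - t) * p + (1 - (1 - t)) * (q + e)).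
  { unfold t, D. field. lra. }
  assert (H1 := Hc p (q + e) t ltac:(lra) ltac:(lra) Ht).
  assert (H2 := Hc p (q + e) (1 - t) ltac:(lra) ltac:(lra) ltac:(lra)).
  rewrite <- E1 in H1. rewrite <- E2 in H2. lra.
Qed.

Lemma ineq1 (h : R -> R) cl x X y e : convex_on cl h -> strictly_increasing_on cl h ->
  0 < e -> 0 <= y -> y < x -> x <= X -> y + 3 * e <= X -> e <= x -> X < cl ->
  (y + e) * h (y + e) - y * h y < x * h X - (x - e) * h (X - e).
Proof.
  intros Hc Hi He Hy Hyx HxX H3 Hex HX.
  assert (S := slope cl h y (X - e) e Hc Hy ltac:(lra) He ltac:(lra)).
  replace (X - e + e) with X in S by ring.
  assert (I1 : h (y + e) < h (X - e)) by (apply Hi; lra).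
  assert (I2 : h y < h (y + e)) by (apply Hi; lra).
  set (D1 := h X - h (X - e)). set (D2 := h (y + e) - h y).
  assert (x * D1 >= y * D1) by (apply Rle_ge, Rmult_le_compat_r; unfold D1, D2 in *; lra).
  assert (y * D1 >= y * D2) by (apply Rle_ge, Rmult_le_compat_l; unfold D1, D2 in *; lra).
  assert (e * h (y + e) < e * h (X - e)) by (apply Rmult_lt_compat_l; lra).
  unfold D1, D2 in *. nra.
Qed.

Lemma ineq2 (h : R -> R) cl a B b e : convex_on cl h -> strictly_increasing_on cl h ->
  0 < e -> 0 <= a -> a <= B -> B + 2 * e <= b -> b < cl ->
  (a + e) * h (B + e) - a * h B <= b * h b - (b - e) * h (b - e).
Proof.
  intros Hc Hi He Ha HaB Hb Hbc.
  assert (S := slope cl h B (b - e) e Hc ltac:(lra) ltac:(lra) He ltac:(lra)).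
  replace (b - e + e) with b in S by ring.
  assert (I1 : h (B + e) <= h (b - e)).
  { destruct (Req_dec (B + e) (b - e)) as [E|E]; [rewrite E; lra|]. left; apply Hi; lra. }
  assert (I2 : h B < h (B + e)) by (apply Hi; lra).
  set (D := h (B + e) - h B).
  assert (a * D <= b * D) by (apply Rmult_le_compat_r; unfold D; lra).
  assert (e * h (B + e) <= e * h (b - e)) by (apply Rmult_le_compat_l; lra).
  unfold D in *. nra.
Qed.

Definition mk2 (a b : nat -> R) : profile := fun j l => if Nat.eqb j 0 then a l else b l.

Lemma agg_split f i k : (i < 2)%nat -> agg f k = f i k + f (1 - i)%nat k.
Proof. intros Hi; unfold agg; destruct i as [|[|]]; simpl; try lia; lra. Qed.

Lemma agg_upd f i s k : (i < 2)%nat -> agg (upd f i s) k = s k + f (1 - i)%nat k.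
Proof. intros Hi; unfold agg, upd; destruct i as [|[|]]; simpl; try lia; lra. Qed.

Lemma upd_same f i s k : upd f i s i k = s k.
Proof. unfold upd; rewrite Nat.eqb_refl; auto. Qed.

Lemma J_upd L T c f i s : (i < 2)%nat ->
  J L T c (upd f i s) i = sumL L (fun k => s k * Tl T c k (s k + f (1 - i)%nat k)).
Proof. intros Hi; unfold J; apply sumL_ext; intros k Hk. rewrite upd_same, agg_upd; auto. Qed.

Lemma feas_upd L c r f i s : (i < 2)%nat -> feasible L c r f ->
  (forall k, (k < L)%nat -> 0 <= s k) -> sumL L s = r i ->
  (forall k, (k < L)%nat -> s k + f (1 - i)%nat k < c k) -> feasible L c r (upd f i s).
Proof.
  intros Hi [F1 [F2 F3]] Hs Hsum Hc. split; [|split].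
  - intros j l Hj Hl. unfold upd. destruct (Nat.eqb_spec j i); auto.
  - intros j Hj. unfold upd. destruct (Nat.eqb_spec j i) as [->|Hne]; [exact Hsum|].
    exact (F2 j Hj).
  - intros l Hl. rewrite agg_upd; auto.
Qed.

Lemma feas_mk2 L c r a b : (forall l, (l < L)%nat -> 0 <= a l) -> (forall l, (l < L)%nat -> 0 <= b l) ->
  sumL L a = r 0%nat -> sumL L b = r 1%nat -> (forall l, (l < L)%nat -> a l + b l < c l) ->
  feasible L c r (mk2 a b).
Proof.
  intros Ha Hb Sa Sb Hc. split; [|split].
  - intros j l Hj Hl. unfold mk2; destruct (Nat.eqb j 0); auto.
  - intros j Hj. unfold mk2; destruct j as [|[|]]; simpl; auto; lia.
  - intros l Hl. unfold agg, mk2; simpl; auto.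
Qed.

Lemma Jsum L T c f : J L T c f 0 + J L T c f 1 = sumL L (fun k => agg f k * Tl T c k (agg f k)).
Proof. unfold J. rewrite <- sumL_plus. apply sumL_ext; intros; unfold agg; ring. Qed.

Lemma sum_agg L c r f : feasible L c r f -> sumL L (agg f) = r 0%nat + r 1%nat.
Proof. intros [_ [F2 _]]. unfold agg. rewrite (sumL_plus L (f 0%nat) (f 1%nat)), F2, F2 by lia. auto. Qed.

Lemma agg_nonneg L c r f l : feasible L c r f -> (l < L)%nat -> 0 <= agg f l.
Proof. intros [F1 _] Hl. unfold agg. assert (H0 := F1 0%nat l ltac:(lia) Hl). assert (H1 := F1 1%nat l ltac:(lia) Hl). lra. Qed.

Lemma dom L c r T fhat fs :
  (forall l, (l < L)%nat -> strictly_increasing_on (c l) (Tl T c l) /\ convex_on (c l) (Tl T c l)) ->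
  is_NEP L T c r fhat -> feasible L c r fs ->
  (forall f, feasible L c r f -> J L T c fs 0 + J L T c fs 1 <= J L T c f 0 + J L T c f 1) ->
  forall i l, (i < 2)%nat -> (l < L)%nat -> fhat i l <= agg fs l.
Proof.
  intros HT [Fh NE] Fs Smin i l Hi Hl.
  destruct (Rle_lt_dec (fhat i l) (agg fs l)) as [|Hgt]; [auto|exfalso].
  set (o := (1 - i)%nat).
  assert (Ho : (o < 2)%nat) by (unfold o; lia).
  assert (Hoi : (1 - o)%nat = i) by (unfold o; lia).
  destruct Fh as [Fh1 [Fh2 Fh3]]. pose proof Fs as Fs'. destruct Fs' as [Fs1 [Fs2 Fs3]].
  assert (Aspl : forall k, agg fhat k = fhat i k + fhat o k) by (intros; apply agg_split; auto).
  set (x := fhat i l). set (X := agg fhat l). set (y := agg fs l).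
  assert (HxX : x <= X) by (unfold X, x; rewrite Aspl; assert (H := Fh1 o l Ho Hl); lra).
  fold x y in Hgt.
  assert (Hy0 : 0 <= y) by (apply (agg_nonneg L c r); auto).
  assert (HS : sumL L (agg fhat) = sumL L (agg fs)).
  { rewrite (sum_agg L c r fs Fs). apply (sum_agg L c r). split; auto. }
  assert (Hyx : agg fs l < agg fhat l).
  { unfold X, x, y in *. lra. }
  destruct (sumL_exists_lt L (agg fhat) (agg fs) l HS Hl Hyx) as [m [Hm Hlt]].
  assert (Hml : m <> l) by (intro; subst m; fold X y in Hlt; lra).
  set (a := fhat i m). set (B := agg fhat m). set (b := agg fs m). fold B b in Hlt.
  assert (Ha0 : 0 <= a) by (apply Fh1; auto).
  assert (HaB : a <= B) by (unfold B, a; rewrite Aspl; assert (H := Fh1 o m Ho Hm); lra).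
  assert (Hb : b < c m) by (apply Fs3; auto).
  assert (HX : X < c l) by (apply Fh3; auto).
  assert (Hj : exists j, (j < 2)%nat /\ b / 2 <= fs j m).
  { destruct (Rle_lt_dec (b / 2) (fs 0%nat m)). exists 0%nat; split; auto.
    exists 1%nat; split; auto. unfold b, agg in *. lra. }
  destruct Hj as [j [Hj Hjm]].
  set (e := Rmin (Rmin x ((X - y) / 3)) (Rmin ((b - B) / 2) (b / 2))).
  assert (He : 0 < e) by (unfold e; repeat apply Rmin_pos; lra).
  assert (He1 : e <= x) by (unfold e; eapply Rle_trans; [apply Rmin_l|apply Rmin_l]).
  assert (He2 : e <= (X - y) / 3) by (unfold e; eapply Rle_trans; [apply Rmin_l|apply Rmin_r]).
  assert (He3 : e <= (b - B) / 2) by (unfold e; eapply Rle_trans; [apply Rmin_r|apply Rmin_l]).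
  assert (He4 : e <= b / 2) by (unfold e; eapply Rle_trans; [apply Rmin_r|apply Rmin_r]).
  set (s := fun k => if Nat.eqb k l then x - e else if Nat.eqb k m then a + e else fhat i k).
  assert (sl : s l = x - e) by (unfold s; rewrite Nat.eqb_refl; auto).
  assert (sm : s m = a + e) by (unfold s; rewrite Nat.eqb_refl; destruct (Nat.eqb_spec m l); [lia|auto]).
  assert (so : forall k, k <> l -> k <> m -> s k = fhat i k).
  { intros k H1 H2; unfold s; destruct (Nat.eqb_spec k l); [lia|]; destruct (Nat.eqb_spec k m); [lia|auto]. }
  assert (Ssum : sumL L s = sumL L (fhat i) + (s l - fhat i l) + (s m - fhat i m)).
  { apply sumL_two; auto. }
  assert (Fd : feasible L c r (upd fhat i s)).
  { apply feas_upd; auto. split; auto.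
    - intros k Hk. destruct (Nat.eq_dec k l); [subst k; lra|]. destruct (Nat.eq_dec k m); [subst k; lra|].
      rewrite so by auto. apply Fh1; auto.
    - rewrite Ssum, sl, sm, Fh2 by auto. fold x a. lra.
    - intros k Hk. fold o. destruct (Nat.eq_dec k l); [subst k; rewrite sl|].
      + assert (X = x + fhat o l) by (unfold X; rewrite Aspl; auto). lra.
      + destruct (Nat.eq_dec k m); [subst k; rewrite sm|].
        * assert (B = a + fhat o m) by (unfold B; rewrite Aspl; auto). lra.
        * rewrite so by auto. rewrite <- Aspl. apply Fh3; auto. }
  assert (NEi := NE i s Hi Fd).
  rewrite J_upd in NEi by auto. fold o in NEi. unfold J in NEi.
  rewrite (sumL_two L (fun k => s k * Tl T c k (s k + fhat o k)) (fun k => fhat i k * Tl T c k (agg fhat k)) l m) in NEi; auto.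
  2:{ intros k Hk H1 H2. rewrite so, Aspl by auto. auto. }
  rewrite sl, sm in NEi. fold x a X B in NEi.
  replace (x - e + fhat o l) with (X - e) in NEi by (unfold X; rewrite Aspl; fold x; ring).
  replace (a + e + fhat o m) with (B + e) in NEi by (unfold B; rewrite Aspl; fold a; ring).
  set (s' := fun k => if Nat.eqb k l then fs j l + e else if Nat.eqb k m then fs j m - e else fs j k).
  assert (sl' : s' l = fs j l + e) by (unfold s'; rewrite Nat.eqb_refl; auto).
  assert (sm' : s' m = fs j m - e) by (unfold s'; rewrite Nat.eqb_refl; destruct (Nat.eqb_spec m l); [lia|auto]).
  assert (so' : forall k, k <> l -> k <> m -> s' k = fs j k).
  { intros k H1 H2; unfold s'; destruct (Nat.eqb_spec k l); [lia|]; destruct (Nat.eqb_spec k m); [lia|auto]. }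
  assert (Aspl' : forall k, agg fs k = fs j k + fs (1 - j)%nat k) by (intros; apply agg_split; auto).
  assert (Fd' : feasible L c r (upd fs j s')).
  { apply feas_upd; auto.
    - intros k Hk. destruct (Nat.eq_dec k l); [subst k; rewrite sl'; assert (H := Fs1 j l Hj Hk); lra|].
      destruct (Nat.eq_dec k m); [subst k; rewrite sm'; lra|].
      rewrite so' by auto. apply Fs1; auto.
    - rewrite (sumL_two L s' (fs j) l m), sl', sm', Fs2 by auto. lra.
    - intros k Hk. destruct (Nat.eq_dec k l); [subst k; rewrite sl'|].
      + assert (y = fs j l + fs (1 - j)%nat l) by (unfold y; auto). lra.
      + destruct (Nat.eq_dec k m); [subst k; rewrite sm'|].
        * assert (b = fs j m + fs (1 - j)%nat m) by (unfold b; auto). lra.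
        * rewrite so' by auto. rewrite <- Aspl'. apply Fs3; auto. }
  assert (SO := Smin _ Fd'). rewrite !Jsum in SO.
  rewrite (sumL_two L (fun k => agg (upd fs j s') k * Tl T c k (agg (upd fs j s') k))
             (fun k => agg fs k * Tl T c k (agg fs k)) l m) in SO; auto.
  2:{ intros k Hk H1 H2. rewrite agg_upd, so', <- Aspl' by auto. auto. }
  rewrite !agg_upd, sl', sm' in SO by auto.
  replace (fs j l + e + fs (1 - j)%nat l) with (y + e) in SO by (unfold y; rewrite Aspl'; ring).
  replace (fs j m - e + fs (1 - j)%nat m) with (b - e) in SO by (unfold b; rewrite Aspl'; ring).
  fold y b in SO.
  destruct (HT l Hl) as [Il Cl]. destruct (HT m Hm) as [Im Cm].
  assert (Q1 := ineq1 (Tl T c l) (c l) x X y e Cl Il He Hy0 Hgt HxX ltac:(lra) He1 HX).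
  assert (Q2 := ineq2 (Tl T c m) (c m) a B b e Cm Im He Ha0 HaB ltac:(lra) Hb).
  lra.
Qed.

Lemma G_sum L T c r Jsys g : (forall f, feasible L c r f -> Jsys <= J L T c f 0 + J L T c f 1) ->
  in_G L T c r g -> Jsys <= fst g + snd g.
Proof.
  intros Hm [ws [_ [HF [H1 [E0 E1]]]]]. rewrite E0, E1.
  assert (forall ws, List.Forall (fun pf => 0 < fst pf /\ feasible L c r (snd pf)) ws ->
    Jsys * wsum ws (fun _ => 1) <= wsum ws (fun f => J L T c f 0) + wsum ws (fun f => J L T c f 1)).
  { clear - Hm. induction ws as [|[p f] t IH]; simpl; intros HF; [lra|].
    inversion HF; subst. simpl in H1. destruct H1 as [Hp Hf]. specialize (IH H2). assert (Hq := Hm f Hf).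
    assert (p * Jsys <= p * (J L T c f 0 + J L T c f 1)) by (apply Rmult_le_compat_l; lra). nra. }
  specialize (H ws HF). rewrite H1 in H. lra.
Qed.

Lemma G_comb L T c r P Q lam : feasible L c r P -> feasible L c r Q -> 0 <= lam <= 1 ->
  in_G L T c r (lam * J L T c P 0 + (1 - lam) * J L T c Q 0, lam * J L T c P 1 + (1 - lam) * J L T c Q 1).
Proof.
  intros FP FQ Hl.
  destruct (Req_dec lam 0) as [->|H0].
  { exists ((1, Q) :: nil)%list. split; [discriminate|]. split; [constructor; [simpl; split; [lra|auto]|constructor]|].
    simpl; repeat split; ring. }
  destruct (Req_dec lam 1) as [->|H1].
  { exists ((1, P) :: nil)%list. split; [discriminate|]. split; [constructor; [simpl; split; [lra|auto]|constructor]|].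
    simpl; repeat split; ring. }
  exists ((lam, P) :: (1 - lam, Q) :: nil)%list. split; [discriminate|].
  split; [constructor; [simpl; split; [lra|auto]|constructor; [simpl; split; [lra|auto]|constructor]]|].
  simpl; repeat split; ring.
Qed.

Theorem lemma3p5 (L : nat) (c r : nat -> R) (T : R -> R)
  (fhat : profile) (Jsys : R) (gt : R * R) :
  (0 < L)%nat ->
  (forall l, (l < L)%nat -> 0 < c l) ->
  0 < r 0%nat -> 0 < r 1%nat ->
  r 0%nat + r 1%nat < sumL L c ->
  (forall l, (l < L)%nat ->
     (forall x, 0 <= x < c l -> 0 <= Tl T c l x) /\
     strictly_increasing_on (c l) (Tl T c l) /\
     convex_on (c l) (Tl T c l) /\
     C1_on (c l) (Tl T c l)) ->
  is_NEP L T c r fhat ->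
  (forall f, is_NEP L T c r f ->
     forall i l, (i < 2)%nat -> (l < L)%nat -> f i l = fhat i l) ->
  is_sys_min L T c r Jsys ->
  is_NBS L T c r (J L T c fhat 0, J L T c fhat 1) gt ->
  fst gt + snd gt = Jsys /\
  J L T c fhat 0 - fst gt = J L T c fhat 1 - snd gt.
Proof.
  intros HL Hc Hr0 Hr1 HR HT NEP _ [[fs [Fs Efs]] Smin] [Adm [Max _]].
  assert (HT' : forall l, (l < L)%nat -> strictly_increasing_on (c l) (Tl T c l) /\ convex_on (c l) (Tl T c l))
    by (intros l Hl; destruct (HT l Hl) as [_ [? [? _]]]; auto).
  assert (Smin' : forall f, feasible L c r f -> J L T c fs 0 + J L T c fs 1 <= J L T c f 0 + J L T c f 1)
    by (rewrite Efs; auto).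
  assert (Dom := dom L c r T fhat fs HT' NEP Fs Smin').
  pose proof NEP as [Fh NE]. pose proof Fh as [Fh1 [Fh2 Fh3]]. pose proof Fs as [Fs1 [Fs2 Fs3]].
  set (A := agg fs).
  set (Jh0 := J L T c fhat 0). set (Jh1 := J L T c fhat 1).
  set (P := mk2 (fun k => A k - fhat 1%nat k) (fhat 1%nat)).
  set (Q := mk2 (fhat 0%nat) (fun k => A k - fhat 0%nat k)).
  assert (SA : sumL L A = r 0%nat + r 1%nat) by (apply (sum_agg L c r); auto).
  assert (FP : feasible L c r P).
  { apply feas_mk2.
    - intros l Hl. assert (H := Dom 1%nat l ltac:(lia) Hl). unfold A; lra.
    - intros; apply Fh1; auto.
    - rewrite sumL_minus, SA, Fh2 by lia. ring.
    - auto.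
    - intros l Hl. replace (A l - fhat 1%nat l + fhat 1%nat l) with (A l) by ring. apply Fs3; auto. }
  assert (FQ : feasible L c r Q).
  { apply feas_mk2.
    - intros; apply Fh1; auto.
    - intros l Hl. assert (H := Dom 0%nat l ltac:(lia) Hl). unfold A; lra.
    - auto.
    - rewrite sumL_minus, SA, Fh2 by lia. ring.
    - intros l Hl. replace (fhat 0%nat l + (A l - fhat 0%nat l)) with (A l) by ring. apply Fs3; auto. }
  assert (aggP : forall k, agg P k = A k) by (intros; unfold agg, P, mk2; simpl; ring).
  assert (aggQ : forall k, agg Q k = A k) by (intros; unfold agg, Q, mk2; simpl; ring).
  assert (SP : J L T c P 0 + J L T c P 1 = Jsys).
  { rewrite <- Efs, !Jsum. apply sumL_ext; intros; rewrite aggP; auto. }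
  assert (SQ : J L T c Q 0 + J L T c Q 1 = Jsys).
  { rewrite <- Efs, !Jsum. apply sumL_ext; intros; rewrite aggQ; auto. }
  assert (B0 : Jh0 <= J L T c P 0).
  { assert (F : feasible L c r (upd fhat 0 (fun k => A k - fhat 1%nat k))).
    { apply feas_upd; auto; simpl.
      - intros l Hl. assert (H := Dom 1%nat l ltac:(lia) Hl). unfold A; lra.
      - rewrite sumL_minus, SA, Fh2 by lia. ring.
      - intros l Hl. replace (A l - fhat 1%nat l + fhat 1%nat l) with (A l) by ring. apply Fs3; auto. }
    assert (H := NE 0%nat _ ltac:(lia) F). rewrite J_upd in H by lia. unfold Jh0. rewrite H.
    unfold J. right. apply sumL_ext; intros k Hk. rewrite aggP. unfold P, mk2; simpl. f_equal. f_equal. ring. }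
  assert (B1 : Jh1 <= J L T c Q 1).
  { assert (F : feasible L c r (upd fhat 1 (fun k => A k - fhat 0%nat k))).
    { apply feas_upd; auto; simpl.
      - intros l Hl. assert (H := Dom 0%nat l ltac:(lia) Hl). unfold A; lra.
      - rewrite sumL_minus, SA, Fh2 by lia. ring.
      - intros l Hl. replace (A l - fhat 0%nat l + fhat 0%nat l) with (A l) by ring. apply Fs3; auto. }
    assert (H := NE 1%nat _ ltac:(lia) F). rewrite J_upd in H by lia. unfold Jh1. rewrite H.
    unfold J. right. apply sumL_ext; intros k Hk. rewrite aggQ. unfold Q, mk2; simpl. f_equal. f_equal. ring. }
  assert (Hsys : Jsys <= Jh0 + Jh1) by (rewrite <- Efs; apply Smin'; auto).
  set (d := (Jh0 + Jh1 - Jsys) / 2).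
  set (p0 := Jh0 - d). set (p1 := Jh1 - d).
  assert (Gp : in_G L T c r (p0, p1)).
  { destruct (Req_dec (J L T c P 0) (J L T c Q 0)) as [E|E].
    -
      assert (Ep0 : p0 = J L T c P 0) by (unfold p0, d in *; lra).
      assert (H := G_comb L T c r P Q 1 FP FQ ltac:(lra)).
      replace (p0, p1) with (1 * J L T c P 0 + (1 - 1) * J L T c Q 0, 1 * J L T c P 1 + (1 - 1) * J L T c Q 1); auto.
      f_equal; unfold p1, p0, d in *; lra.
    - set (lam := (p0 - J L T c Q 0) / (J L T c P 0 - J L T c Q 0)).
      assert (Hpos : 0 < J L T c P 0 - J L T c Q 0) by (unfold p0, d in *; lra).
      assert (Hlam : 0 <= lam <= 1).
      { unfold lam; split.
        - apply Rdiv_le_0_compat; [unfold p0, d in *; lra|auto].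
        - apply Rmult_le_reg_r with (J L T c P 0 - J L T c Q 0); auto. unfold Rdiv.
          rewrite Rmult_assoc, Rinv_l by lra. unfold p0, d in *; lra. }
      assert (H := G_comb L T c r P Q lam FP FQ Hlam).
      assert (E1 : lam * J L T c P 0 + (1 - lam) * J L T c Q 0 = p0) by (unfold lam; field; lra).
      replace (p0, p1) with (lam * J L T c P 0 + (1 - lam) * J L T c Q 0, lam * J L T c P 1 + (1 - lam) * J L T c Q 1); auto.
      f_equal; auto.
      replace (J L T c P 1) with (Jsys - J L T c P 0) by lra.
      replace (J L T c Q 1) with (Jsys - J L T c Q 0) by lra.
      unfold p1, p0, d in *. nra. }
  assert (Hd : 0 <= d) by (unfold d; lra).
  assert (Admp : bargain_adm L T c r (Jh0, Jh1) (p0, p1)).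
  { split; auto. simpl. unfold p0, p1; lra. }
  assert (M := Max _ Admp). unfold nash_prod in M. simpl in M. fold Jh0 Jh1 in M.
  destruct Adm as [Gg [Hg0 Hg1]]. simpl in Hg0, Hg1. fold Jh0 Jh1 in Hg0, Hg1 |- *.
  assert (Sg := G_sum L T c r Jsys gt ltac:(rewrite <- Efs; auto) Gg).
  replace (Jh0 - p0) with d in M by (unfold p0; ring).
  replace (Jh1 - p1) with d in M by (unfold p1; ring).
  set (a := Jh0 - fst gt) in *. set (b := Jh1 - snd gt) in *.
  assert (Hab : a + b <= 2 * d) by (unfold a, b, d; lra).
  assert (Ha : 0 <= a) by (unfold a; lra). assert (Hb : 0 <= b) by (unfold b; lra).
  assert (Sq : (a + b) * (a + b) <= (2 * d) * (2 * d)) by (apply Rmult_le_compat; lra).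
  assert (E1 : (a - b) * (a - b) <= 0) .
  { nra. }
  assert (Eab : a - b = 0) by nra.
  assert (Esum : (2 * d - (a + b)) * (2 * d + (a + b)) = 0) by nra.
  assert (Esum' : a + b = 2 * d).
  { destruct (Rmult_integral _ _ Esum); lra. }
  split; unfold a, b, d in *; lra.
Qed.
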